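(* Let $m<n$ be integers with $m\ge -1$ even, and let $p\in\Gamma_n$. Suppose $p\hat a=bqa$ for paths $\hat a,a,b$ and $q\in\Gamma_m$ (so that $q$ occurs in the path $p\hat a$, in which $p$ occurs as a suffix). Then $b\notin I$ if and only if the occurrence of $q$ lies inside $\sigma_{m+1}(p)$. In particular, in that case $q$ lies inside $p$. Dually, if $\hat b p=bqa$ with $q\in\Gamma_m$, then $a\notin I$ if and only if the occurrence of $q$ lies inside $\pi_{m+1}(p)$.
   Context: Let $\Bbbk$ be a field, $Q=(Q_0,Q_1,s,t)$ a finite quiver, and $A=\Bbbk Q/I$ a finite-dimensional monomial algebra, i.e. $I$ is an ideal generated by paths of length at least $2$. Paths are written from right to left: a path is $p=\alpha_n\cdots\alpha_1$ with arrows $\alpha_i$ and $t(\alpha_i)=s(\alpha_{i+1})$; vertices are the paths of length $0$ (trivial paths, also denoted $1$); $qp$ denotes concatenation when $t(p)=s(q)$. Let $\mathcal B$ be the set of paths not lying in $I$. If $p=bqa$ for paths $a,b,q$, then $q$ is a divisor of $p$; we write $q\le p$ to mean that $q$ is a divisor of $p$ at a fixed position (an occurrence). If $b$ is trivial, $q$ is a suffix; if $a$ is trivial, $q$ is a prefix; proper means $q\neq p$. For $n\ge -1$, a left $n$-ambiguity is a path $p$ with a decomposition $p=u_{-1}u_0u_1\cdots u_n$ such that $u_{-1}\in Q_0$, $u_0\in Q_1$, $u_i\in\mathcal B$ for all $i$, and for every $0\le i\le n-1$, $u_iu_{i+1}\in I$ while no proper suffix of $u_iu_{i+1}$ lies in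 $I$ (one writes $p=u_0\cdots u_n$). A right $n$-ambiguity is a path with a decomposition $p=v_n\cdots v_0v_{-1}$ with $v_{-1}\in Q_0$, $v_0\in Q_1$, $v_i\in\mathcal B$, and for $0\le i\le n-1$, $v_{i+1}v_i\in I$ while no proper prefix of $v_{i+1}v_i$ lies in $I$. A path is a left $n$-ambiguity iff it is a right $n$-ambiguity; such paths are called $n$-ambiguities, and $\Gamma_n$ denotes their set. Both decompositions of an $n$-ambiguity are unique. For $p\in\Gamma_n$ with left decomposition $u_0\cdots u_n$ and right decomposition $v_n\cdots v_0$, and $-1\le m\le n$, set $\sigma_m(p):=u_0\cdots u_m$ (a suffix of $p$ which is an $m$-ambiguity) and $\pi_m(p):=v_m\cdots v_0$ (a prefix of $p$ which is an $m$-ambiguity). *)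

(* Defs.v *)
From mathcomp Require Import all_boot.
Set Implicit Arguments.
Unset Strict Implicit.
Unset Printing Implicit Defensive.

(* Paths are written from right
   to left: the path alpha_n ... alpha_1 (alpha_1 traversed first) is stored
   with arrs = [:: alpha_n; ...; alpha_1] (written order), together with its
   source and target vertices (needed for trivial paths). *)

Record qpath (V A : Type) := QPath { src : V; tgt : V; arrs : seq A }.

Section Paths.
Variables (V A : finType) (s t : A -> V).

Notation qp := (qpath V A).

Definition valid (p : qp) : bool :=
  match arrs p with
  | [::] => src p == tgt p
  | a :: l => [&& t a == tgt p,
                  path (fun x y => s x == t y) a l
                & s (last a l) == src p]
  end.

Definition len (p : qp) : nat := size (arrs p).

Definition composable (q p : qp) : bool := src q == tgt p.

Definition pcat (q p : qp) : qp := QPath (src p) (tgt q) (arrs q ++ arrs p).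

Definition divisor (q p : qp) : Prop :=
  exists b a, [/\ valid b, valid a, composable b q, composable q a & p = pcat b (pcat q a)].

Definition proper_suffix (q w : qp) : Prop :=
  (exists a, [/\ valid a, composable q a & w = pcat q a]) /\ q <> w.

Definition proper_prefix (q w : qp) : Prop :=
  (exists b, [/\ valid b, composable b q & w = pcat b q]) /\ q <> w.

(* the monomial ideal generated by the set of paths [rels] *)
Variable rels : qp -> Prop.

Definition inI (p : qp) : Prop := exists r, rels r /\ divisor r p.

Definition inB (p : qp) : Prop := valid p /\ ~ inI p.

Definition trivialp (p : qp) : Prop := valid p /\ arrs p = [::].
Definition arrowp (p : qp) : Prop := valid p /\ len p = 1.

Fixpoint prodp (d : qp) (l : seq qp) : qp :=
  match l with
  | [::] => d
  | x :: l' => match l' with [::] => x | _ => pcat x (prodp d l') end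
  end.

Definition left_step (x y : qp) : Prop :=
  [/\ composable x y, inI (pcat x y) &
      forall q, proper_suffix q (pcat x y) -> ~ inI q].

Definition right_step (x y : qp) : Prop :=
  [/\ composable x y, inI (pcat x y) &
      forall q, proper_prefix q (pcat x y) -> ~ inI q].

(* left n-ambiguity decomposition p = u_{-1} u_0 u_1 ... u_n,
   with u_{-1} = u1 and us = [:: u_0; ...; u_n] *)
Definition left_dec (n : nat) (p u1 : qp) (us : seq qp) : Prop :=
  size us = n.+1 /\
  trivialp u1 /\
  arrowp (nth u1 us 0) /\
  (forall i, i < n.+1 -> inB (nth u1 us i)) /\
  composable u1 (nth u1 us 0) /\
  (forall i, i < n -> left_step (nth u1 us i) (nth u1 us i.+1)) /\
  p = prodp u1 (u1 :: us).

(* right n-ambiguity decomposition p = v_n ... v_1 v_0 v_{-1},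
   with v_{-1} = v1 and vs = [:: v_0; ...; v_n] *)
Definition right_dec (n : nat) (p v1 : qp) (vs : seq qp) : Prop :=
  size vs = n.+1 /\
  trivialp v1 /\
  arrowp (nth v1 vs 0) /\
  (forall i, i < n.+1 -> inB (nth v1 vs i)) /\
  composable (nth v1 vs 0) v1 /\
  (forall i, i < n -> right_step (nth v1 vs i.+1) (nth v1 vs i)) /\
  p = prodp v1 (rcons (rev vs) v1).

(* Gamma_n: paths that are (left and, equivalently, right) n-ambiguities *)
Definition Gamma (n : nat) (p : qp) : Prop :=
  (exists u1 us, left_dec n p u1 us) /\ (exists v1 vs, right_dec n p v1 vs).

(* sigma_m(p) = u_0 ... u_m and pi_m(p) = v_m ... v_0 computed from the
   (unique) decompositions *)
Definition sigma_amb (m : nat) (u1 : qp) (us : seq qp) : qp :=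
  prodp u1 (take m.+1 us).
Definition pi_amb (m : nat) (v1 : qp) (vs : seq qp) : qp :=
  prodp v1 (rev (take m.+1 vs)).

End Paths.

(* Main.v *)
Require Import Defs.
From mathcomp Require Import all_boot.
From mathcomp Require Import zify.
Set Implicit Arguments.
Unset Strict Implicit.
Unset Printing Implicit Defensive.

Section Core.
Variable T : Type.

Definition occ (Rel : seq T -> Prop) (w : seq T) s E :=
  [/\ s <= E, E <= size w & Rel (take (E - s) (drop s w))].
Definition inL Rel w := exists s E, occ Rel w s E.
Definition minL Rel w := inL Rel w /\ forall k, k < size w -> ~ inL Rel (take k w).

Lemma occ_catl Rel u v s E : E <= size u -> (occ Rel (u ++ v) s E <-> occ Rel u s E).
Proof.
move=> hE; rewrite /occ size_cat.
have hs : forall (h : s <= E), take (E - s) (drop s (u ++ v)) = take (E - s) (drop s u).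
  move=> h; case: (ltnP s (size u)) => hsu.
    by rewrite drop_cat hsu takel_cat // size_drop; lia.
  have -> : E - s = 0 by lia.
  by rewrite !take0.
split; case=> h1 h2 h3; split => //.
- by rewrite -hs.
- lia.
- by rewrite hs.
Qed.

Lemma occ_catr Rel u v s E : occ Rel (u ++ v) (size u + s) (size u + E) <-> occ Rel v s E.
Proof.
rewrite /occ size_cat.
have -> : size u + E - (size u + s) = E - s by lia.
rewrite drop_cat ifF; last by apply/negbTE; rewrite -leqNgt leq_addr.
have -> : size u + s - size u = s by lia.
split; case=> h1 h2 h3; split => //; lia.
Qed.

Lemma occ_take Rel w k s E : k <= size w -> (occ Rel (take k w) s E <-> occ Rel w s E /\ E <= k).
Proof.
move=> hk.
have sz : size (take k w) = k by rewrite size_take; case: ltngtP hk => //; lia.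
case: (leqP E k) => hE.
  rewrite -{2}(cat_take_drop k w) occ_catl ?sz //.
  by split; [move=> h; split | case].
split; first by case; rewrite sz; lia.
by case.
Qed.

Lemma inL_take Rel w k : k <= size w -> (inL Rel (take k w) <-> exists s E, occ Rel w s E /\ E <= k).
Proof.
move=> hk; split.
  by case=> s [E /(occ_take _ _ _ hk) h]; exists s, E.
by case=> s [E h]; exists s, E; apply/occ_take.
Qed.

Lemma occ_rev Rel w s E : occ Rel w s E ->
  occ (fun l => Rel (rev l)) (rev w) (size w - E) (size w - s).
Proof.
case=> h1 h2 h3; split; rewrite ?size_rev; try lia.
rewrite drop_rev.
have -> : size w - (size w - E) = E by lia.
rewrite take_rev size_take.
have -> : (if E < size w then E else size w) = E by case: ltngtP h2; lia.
have -> : E - (size w - s - (size w - E)) = s by lia.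
rewrite revK; move: h3; rewrite take_drop.
by have -> : E - s + s = E by lia.
Qed.

Lemma inL_rev Rel w : inL (fun l => Rel (rev l)) (rev w) <-> inL Rel w.
Proof.
split; last by case=> s [E /occ_rev h]; eexists; eexists; exact: h.
case=> s [E /occ_rev h]; eexists; eexists.
move: h; rewrite revK; case=> h1 h2; rewrite revK => h3; split; [exact: h1 | exact: h2 | exact: h3].
Qed.


Lemma chain_AB Rel W pre post (L : seq (seq T)) n :
  W = pre ++ flatten L ++ post -> size L = n.+1 ->
  (forall i, i < n -> minL Rel (nth [::] L i ++ nth [::] L i.+1)) ->
  forall i, i < n ->
  (exists s, size pre + size (flatten (take i L)) <= s /\
             occ Rel W s (size pre + size (flatten (take i.+2 L)))) /\
  (forall s E, size pre + size (flatten (take i L)) <= s ->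
               E < size pre + size (flatten (take i.+2 L)) -> ~ occ Rel W s E).
Proof.
move=> hW hL hmin i hi.
set w := nth [::] L i ++ nth [::] L i.+1.
set pre' := pre ++ flatten (take i L).
set post' := flatten (drop i.+2 L) ++ post.
have hd : drop i L = nth [::] L i :: nth [::] L i.+1 :: drop i.+2 L.
  rewrite (drop_nth [::] (_: i < size L)); last by rewrite hL; lia.
  by rewrite (drop_nth [::] (_: i.+1 < size L)) //; rewrite hL; lia.
have hW' : W = pre' ++ w ++ post'.
  rewrite hW /pre' /w /post' -!catA; congr (_ ++ _).
  rewrite -{1}(cat_take_drop i L) flatten_cat -catA; congr (_ ++ _).
  by rewrite hd /= !catA.
have hsz : size pre + size (flatten (take i.+2 L)) = size pre' + size w.
  rewrite /pre' size_cat -addnA; congr (_ + _).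
  rewrite -addn2 takeD flatten_cat size_cat; congr (_ + _).
  by rewrite hd /= take0 /= cats0.
have hsz0 : size pre + size (flatten (take i L)) = size pre' by rewrite /pre' size_cat.
have key : forall a b, occ Rel W (size pre' + a) (size pre' + b) <-> occ Rel (w ++ post') a b.
  by move=> a b; rewrite hW' occ_catr.
rewrite hsz hsz0; split.
- case: (hmin i hi) => [[a [b hab]] hno].
  have hb : b = size w.
    move: (hab) => [h1 h2 h3]; apply/eqP; rewrite eqn_leq h2 /= leqNgt; apply/negP => hlt.
    apply: (hno b hlt); apply/inL_take; first lia.
    by exists a, b; split.
  exists (size pre' + a); split; first lia.
  by rewrite key occ_catl ?hb // -hb.
- move=> s E hs hE hocc.
  have hsE : s <= E by case: hocc.
  case: (hmin i hi) => _ hno.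
  move: hocc; rewrite (_ : s = size pre' + (s - size pre')); last lia.
  rewrite (_ : E = size pre' + (E - size pre')); last lia.
  rewrite key occ_catl; last lia.
  move=> h; move: hno; rewrite -/w => hno; apply: (hno (E - size pre')); first lia.
  apply/inL_take; first lia.
  by exists (s - size pre'), (E - size pre'); split.
Qed.

End Core.

Lemma comb (R : nat -> nat -> Prop) (e g : nat -> nat) n m x :
  (forall s E, R s E -> s <= E) ->
  (forall i, i < n -> exists s, e i <= s /\ R s (e i.+2)) ->
  (forall i, i < n -> forall s E, e i <= s -> E < e i.+2 -> ~ R s E) ->
  (forall j, j < m -> exists s, g j <= s /\ R s (g j.+2)) ->
  (forall j, j < m -> forall s E, g j <= s -> E < g j.+2 -> ~ R s E) ->
  e 0 = 0 -> g 0 = x -> g 1 = x.+1 -> g m < g m.+1 -> ~~ odd m -> m < n ->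
  ((forall s E, E <= x -> ~ R s E) <-> g m.+1 <= e m.+2).
Proof.
move=> HR Ae Be Ag Bg e0 g0 g1 gm hodd hmn.
have mono1 : forall i j, g j <= e i -> j < m -> i < n -> g j.+2 <= e i.+2.
  move=> i j h hj hi; case: (Ae i hi) => s [h1 h2].
  rewrite leqNgt; apply/negP => hlt.
  by apply: (Bg j hj s (e i.+2)) => //; lia.
have mono2 : forall i j, e i <= g j -> j < m -> i < n -> e i.+2 <= g j.+2.
  move=> i j h hj hi; case: (Ag j hj) => s [h1 h2].
  rewrite leqNgt; apply/negP => hlt.
  by apply: (Be i hi s (g j.+2)) => //; lia.
have hm : m = 2 * m./2.
  by move: (odd_double_half m); rewrite (negbTE hodd) -muln2 mulnC add0n.
split.
- move=> hno.
  have hx : x < e 2.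
    rewrite ltnNge; apply/negP => hle.
    case: (Ae 0 _) => [|s [_ hs]]; first lia.
    exact: (hno s (e 2)).
  have Hf : forall k, 2 * k <= m -> g (2 * k).+1 <= e (2 * k).+2.
    elim=> [|k IH] hk; first by rewrite g1.
    have := mono1 (2 * k).+2 (2 * k).+1 (IH _) _ _.
    have -> : (2 * k.+1) = (2 * k).+2 by lia.
    apply; lia.
  by rewrite hm; apply: Hf; rewrite -hm.
- move=> h.
  have hx : x < e 2.
    rewrite ltnNge; apply/negP => hle.
    have Hb : forall k, 2 * k <= m -> e (2 * k).+2 <= g (2 * k).
      elim=> [|k IH] hk; first by rewrite g0.
      have := mono2 (2 * k).+2 (2 * k) (IH _) _ _.
      have -> : (2 * k.+1) = (2 * k).+2 by lia.
      apply; lia.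
    have := Hb (m./2); rewrite -hm => /(_ (leqnn _)) hh.
    lia.
  move=> s E hE hR.
  apply: (Be 0 _ s E) => //; first lia.
  by rewrite e0.
  lia.
Qed.

Lemma master (T : Type) Rel (W post qpre qpost : seq T) (L K : seq (seq T)) n m :
  W = flatten L ++ post -> size L = n.+1 ->
  (forall i, i < n -> minL Rel (nth [::] L i ++ nth [::] L i.+1)) ->
  W = qpre ++ flatten K ++ qpost -> size K = m.+1 -> size (nth [::] K 0) = 1 ->
  (forall j, j < m -> minL Rel (nth [::] K j ++ nth [::] K j.+1)) ->
  (forall j, j <= m -> ~ inL Rel (nth [::] K j)) ->
  ~~ odd m -> m < n ->
  (~ inL Rel (take (size qpre) W) <->
     size qpre + size (flatten K) <= size (flatten (take m.+2 L))).
Proof.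
move=> hW hL hminL hW2 hK hK0 hminK hBK hodd hmn.
have hW1 : W = [::] ++ flatten L ++ post by [].
have cL := chain_AB hW1 hL hminL.
have cK := chain_AB hW2 hK hminK.
have hKm : 0 < size (nth [::] K m).
  case: m hminK hBK hodd hmn hK {cK} => [|m'] hminK hBK _ _ hK; first by rewrite hK0.
  case he: (nth [::] K m'.+1) => [|a l] //.
  case: (hminK m' (ltnSn _)) => hin _.
  move: hin; rewrite he cats0 => hin.
  by exfalso; exact: (hBK m' (leqW (leqnn _)) hin).
have hsK : size (flatten (take m.+1 K)) = size (flatten K) by rewrite take_oversize // hK.
suff hc : ((forall s E, E <= size qpre -> ~ occ Rel W s E) <->
   size qpre + size (flatten (take m.+1 K)) <= size (flatten (take m.+2 L))).
  rewrite -hsK -hc.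
  have hx : size qpre <= size W by rewrite hW2 size_cat leq_addr.
  split.
  + move=> hno s E hE hocc; apply: hno; apply/inL_take => //.
    by exists s, E.
  + by move=> hno /(@inL_take _ Rel W (size qpre) hx) [s [E [hocc hE]]]; apply: (hno s E).
apply: (@comb (occ Rel W) (fun k => size (flatten (take k L)))
  (fun k => size qpre + size (flatten (take k K))) n m (size qpre)) => //.
- by move=> s E; case.
- by move=> i hi; case: (cL i hi).
- by move=> i hi; case: (cL i hi).
- by move=> j hj; case: (cK j hj).
- by move=> j hj; case: (cK j hj).
- by rewrite take0.
- by rewrite take0 addn0.
- rewrite (take_nth [::] (_ : 0 < size K)) ?hK // take0 /= cats0 hK0 addn1 //.
- rewrite (take_nth [::] (_ : m < size K)) ?hK // flatten_rcons size_cat.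
  by rewrite ltn_add2l -{1}(addn0 (size _)) ltn_add2l.
Qed.
Set Implicit Arguments.
Unset Strict Implicit.
Unset Printing Implicit Defensive.

Section P.
Variables (V A : finType) (s t : A -> V).
Notation qp := (qpath V A).

Lemma valid_split (P : qp) l1 l2 : valid s t P -> arrs P = l1 ++ l2 ->
  exists Q a, [/\ valid s t Q, valid s t a, composable Q a, P = pcat Q a & arrs Q = l1 /\ arrs a = l2].
Proof.
case: P => x y ap /= hv hap; subst ap.
case: l1 hv => [|c l1'] hv.
  exists (QPath y y [::]), (QPath x y l2); split => //=;
  by rewrite /valid /composable /pcat /= ?eqxx.
case: l2 hv => [|d l2'] hv.
  exists (QPath x y (c :: l1')), (QPath x x [::]); split => //=;
  by move: hv; rewrite /valid /composable /pcat /= ?cats0 ?eqxx.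
move: hv; rewrite /valid /= cat_path last_cat /= => /and3P [h1 /andP [h2 h3] h4].
move: h3 => /= /andP [h5 h6].
exists (QPath (s (last c l1')) y (c :: l1')), (QPath x (s (last c l1')) (d :: l2')).
split => //=.
- by rewrite /valid /= h1 h2 eqxx.
- by rewrite /valid /= eq_sym h5 h6 h4.
- by rewrite /composable /=.
Qed.

Lemma valid_cat (x y : qp) : valid s t x -> valid s t y -> composable x y -> valid s t (pcat x y).
Proof.
case: x => sx tx ax; case: y => sy ty ay; rewrite /valid /composable /pcat /=.
case: ax => [|a ax] /=.
  move=> /eqP <- hy /eqP ->; by case: ay hy.
case: ay => [|b ay] /=.
  by rewrite cats0 => h /eqP <- /eqP <-.
move=> /and3P [h1 h2 h3] /and3P [h4 h5 h6] /eqP h7.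
rewrite h1 cat_path h2 /= last_cat /= h6 andbT.
by rewrite (eqP h3) h7 eq_sym h4 h5.
Qed.

Lemma valid_uniq (P P' : qp) : valid s t P -> valid s t P' -> arrs P = arrs P' -> arrs P != [::] -> P = P'.
Proof.
case: P => x y ap; case: P' => x' y' ap'; rewrite /valid /= => h1 h2 e; subst ap'.
case: ap h1 h2 => [|a l] //= h1 h2 _.
move/and3P: h1 => [e1 _ e2]; move/and3P: h2 => [e3 _ e4].
by rewrite -(eqP e1) -(eqP e2) -(eqP e3) -(eqP e4).
Qed.

Variable rels : qp -> Prop.
Definition RelL (l : seq A) := exists r, rels r /\ arrs r = l.
Definition RelR (l : seq A) := RelL (rev l).

Lemma inI_inL (P : qp) : inI s t rels P -> inL RelL (arrs P).
Proof.
case=> r [hr [b [a [_ _ _ _ hP]]]].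
exists (size (arrs b)), (size (arrs b) + size (arrs r)); split.
- by rewrite leq_addr.
- by rewrite hP /= !size_cat addnA leq_addr.
- exists r; split => //; rewrite hP /= drop_size_cat //.
  by rewrite (_ : _ - _ = size (arrs r)) ?take_size_cat //; lia.
Qed.

Hypothesis Hrels : forall r, rels r -> valid s t r /\ 2 <= len r.

Lemma inL_inI (P : qp) : valid s t P -> inL RelL (arrs P) -> inI s t rels P.
Proof.
move=> hv [i [E [h1 h2 [r [hr hra]]]]].
have [hvr hlr] := Hrels hr.
have e1 : arrs P = take i (arrs P) ++ (arrs r ++ drop E (arrs P)).
  rewrite hra -{1}(cat_take_drop i (arrs P)); congr (_ ++ _).
  rewrite -{1}(cat_take_drop (E - i) (drop i (arrs P))) drop_drop.
  by rewrite (_ : E - i + i = E) //; lia.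
have [b [a1 [hb ha1 hc1 hP1 [hb1 ha11]]]] := valid_split hv e1.
have [r' [a [hr' ha hc2 ha1e [hr'1 ha2]]]] := valid_split ha1 ha11.
have er : r' = r.
  apply: valid_uniq => //.
  by rewrite hr'1; apply/eqP => he; move: hlr; rewrite /len he.
subst r'.
exists r; split => //; exists b, a; split => //.
- by move: hc1; rewrite ha1e.
- by rewrite hP1 ha1e.
Qed.

Lemma left_minL (x y : qp) : valid s t x -> valid s t y -> left_step s t rels x y ->
  minL RelL (arrs x ++ arrs y).
Proof.
move=> hx hy [hc hI hno]; split; first exact: (inI_inL hI).
move=> k hk hin.
have hv := valid_cat hx hy hc.
have e1 : arrs (pcat x y) = take k (arrs x ++ arrs y) ++ drop k (arrs x ++ arrs y) by rewrite cat_take_drop.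
have [Q [a [hQ ha hQa hP [hQ1 ha1]]]] := valid_split hv e1.
apply: (hno Q); last by apply: inL_inI => //; rewrite hQ1.
split; first by exists a.
move=> hQe; move: (congr1 (fun z => size (arrs z)) hQe); rewrite hQ1 /= size_cat size_take.
by move: hk; rewrite size_cat => hk; rewrite hk => hh; move: hk; rewrite hh ltnn.
Qed.

Lemma right_minL (x y : qp) : valid s t x -> valid s t y -> right_step s t rels x y ->
  minL RelR (rev (arrs x ++ arrs y)).
Proof.
move=> hx hy [hc hI hno]; split; first by apply/inL_rev; exact: (inI_inL hI).
move=> k; rewrite size_rev => hk; rewrite take_rev size_cat => hin.
have hv := valid_cat hx hy hc.
set j := size (arrs x) + size (arrs y) - k.
have e1 : arrs (pcat x y) = take j (arrs x ++ arrs y) ++ drop j (arrs x ++ arrs y) by rewrite cat_take_drop.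
have [b [Q [hb hQ hbQ hP [hb1 hQ1]]]] := valid_split hv e1.
apply: (hno Q); last by apply: inL_inI => //; rewrite hQ1; apply/inL_rev.
split; first by exists b.
move=> hQe; move: (congr1 (fun z => size (arrs z)) hQe); rewrite hQ1 /= size_drop !size_cat.
rewrite /j; move: hk; rewrite size_cat; lia.
Qed.

Lemma arrs_prodp (d : qp) (l : seq qp) : 0 < size l -> arrs (prodp d l) = flatten (map (@arrs V A) l).
Proof.
elim: l => [|x l IH] // _; case: l IH => [|y l] IH /=; first by rewrite cats0.
by rewrite IH.
Qed.


Lemma revflat (X : seq qp) :
  flatten [seq rev (arrs v) | v <- X] = rev (flatten [seq arrs v | v <- rev X]).
Proof. by rewrite rev_flatten map_rev map_rev revK -map_comp. Qed.

Lemma left_info n (p u1 : qp) us : left_dec s t rels n p u1 us ->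
  let L := map (@arrs V A) us in
  [/\ arrs p = flatten L, size L = n.+1, size (nth [::] L 0) = 1,
      (forall i, i < n -> minL RelL (nth [::] L i ++ nth [::] L i.+1)) &
      (forall i, i <= n -> ~ inL RelL (nth [::] L i))].
Proof.
move=> [hsz [[_ htr] [[_ harr] [hB [hc [hstep hp]]]]]] L.
have hn : forall i, i < n.+1 -> nth [::] L i = arrs (nth u1 us i).
  by move=> i hi; rewrite /L (nth_map u1) // hsz.
split.
- by rewrite hp arrs_prodp //= htr.
- by rewrite /L size_map.
- by rewrite hn.
- move=> i hi; rewrite !hn //; try lia.
  have [hv1 _] := hB i (leqW hi).
  have [hv2 _] := hB i.+1 hi.
  exact: left_minL (hstep i hi).
- move=> i hi; rewrite hn // => hin.
  have [hv hn'] := hB i hi; apply: hn'; exact: inL_inI.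
Qed.

Lemma right_info n (p v1 : qp) vs : right_dec s t rels n p v1 vs ->
  let L := map (fun v => rev (@arrs V A v)) vs in
  [/\ rev (arrs p) = flatten L, size L = n.+1, size (nth [::] L 0) = 1,
      (forall i, i < n -> minL RelR (nth [::] L i ++ nth [::] L i.+1)) &
      (forall i, i <= n -> ~ inL RelR (nth [::] L i))].
Proof.
move=> [hsz [[_ htr] [[_ harr] [hB [hc [hstep hp]]]]]] L.
have hn : forall i, i < n.+1 -> nth [::] L i = rev (arrs (nth v1 vs i)).
  by move=> i hi; rewrite /L (nth_map v1) // hsz.
split.
- rewrite hp arrs_prodp ?size_rcons // map_rcons flatten_rcons htr cats0.
  by rewrite /L revflat.
- by rewrite /L size_map.
- by rewrite hn // size_rev.
- move=> i hi; rewrite !hn //; try lia.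
  have [hv1 _] := hB i (leqW hi).
  have [hv2 _] := hB i.+1 hi.
  rewrite -rev_cat; exact: right_minL (hstep i hi).
- move=> i hi; rewrite hn // => hin.
  have [hv hn'] := hB i hi; apply: hn'; apply: inL_inI => //.
  exact/(inL_rev (RelL)).
Qed.

End P.
Unset Implicit Arguments.

Theorem mainTheorem8
  (V A : finType) (s t : A -> V) (rels : qpath V A -> Prop)
  (Hrels : forall r, rels r -> valid s t r /\ 2 <= len r)
  (Hfin : exists N, forall p, valid s t p -> N <= len p -> inI s t rels p)
  (m n : nat) (Hm : ~~ odd m) (Hmn : m < n)
  (p : qpath V A) (Hp : Gamma s t rels n p) :
  (forall ah a b q,
     valid s t ah -> valid s t a -> valid s t b ->
     Gamma s t rels m q ->
     composable p ah -> composable b q -> composable q a ->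
     pcat p ah = pcat b (pcat q a) ->
     forall u1 us, left_dec s t rels n p u1 us ->
       (~ inI s t rels b <-> len b + len q <= len (sigma_amb m.+1 u1 us))
       /\ (~ inI s t rels b -> len b + len q <= len p))
  /\
  (forall bh a b q,
     valid s t bh -> valid s t a -> valid s t b ->
     Gamma s t rels m q ->
     composable bh p -> composable b q -> composable q a ->
     pcat bh p = pcat b (pcat q a) ->
     forall v1 vs, right_dec s t rels n p v1 vs ->
       (~ inI s t rels a <-> len q + len a <= len (pi_amb m.+1 v1 vs))).
Proof.
split.
- move=> ah a b q hah ha hb [[w1 [ws hqdec]] _] hpah hbq hqa heq u1 us hdec.
  have [hp hL hL0 hminL hBL] := left_info Hrels hdec.
  have [hq hK hK0 hminK hBK] := left_info Hrels hqdec.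
  have e := congr1 (@arrs V A) heq; rewrite /= in e.
  have hW1 : arrs p ++ arrs ah = flatten (map (@arrs V A) us) ++ arrs ah by rewrite hp.
  have hW2 : arrs p ++ arrs ah = arrs b ++ flatten (map (@arrs V A) ws) ++ arrs a by rewrite e hq.
  have hm := master hW1 hL hminL hW2 hK hK0 hminK hBK Hm Hmn.
  rewrite hW2 (take_size_cat _ (erefl _)) in hm.
  have hbI : ~ inI s t rels b <-> ~ inL (RelL rels) (arrs b).
    split=> h1 h2; apply: h1; [exact: (inL_inI Hrels hb h2) | exact: (inI_inL h2)].
  have hsig : len (sigma_amb m.+1 u1 us) = size (flatten (take m.+2 (map (@arrs V A) us))).
    rewrite /len /sigma_amb arrs_prodp ?map_take // size_take; move: hL; rewrite size_map => ->; by case: ifP.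
  have hlq : len q = size (flatten (map (@arrs V A) ws)) by rewrite /len hq.
  have key := iff_trans hbI hm.
  rewrite hsig hlq /len; split => // hnb.
  apply: (leq_trans (proj1 key hnb)).
  rewrite hp -{2}(cat_take_drop m.+2 (map (@arrs V A) us)) flatten_cat size_cat.
  exact: leq_addr.
- move=> bh a b q hbh ha hb [_ [w1 [ws hqdec]]] hpah hbq hqa heq v1 vs hdec.
  have [hp hL hL0 hminL hBL] := right_info Hrels hdec.
  have [hq hK hK0 hminK hBK] := right_info Hrels hqdec.
  have e := congr1 (fun z => rev (@arrs V A z)) heq; rewrite /= !rev_cat in e.
  have hW1 : rev (arrs p) ++ rev (arrs bh) =
     flatten (map (fun v => rev (@arrs V A v)) vs) ++ rev (arrs bh) by rewrite hp.
  have hW2 : rev (arrs p) ++ rev (arrs bh) =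
     rev (arrs a) ++ flatten (map (fun v => rev (@arrs V A v)) ws) ++ rev (arrs b).
    by rewrite e hq catA.
  have hm := master hW1 hL hminL hW2 hK hK0 hminK hBK Hm Hmn.
  rewrite hW2 (take_size_cat _ (erefl _)) in hm.
  have haI : ~ inI s t rels a <-> ~ inL (RelR rels) (rev (arrs a)).
    split=> h1 h2; apply: h1.
    + by apply: (inL_inI Hrels ha); apply/(inL_rev (RelL rels)).
    + by apply/(inL_rev (RelL rels)); exact: (inI_inL h2).
  have hpi : len (pi_amb m.+1 v1 vs) =
      size (flatten (take m.+2 (map (fun v => rev (@arrs V A v)) vs))).
    rewrite /len /pi_amb arrs_prodp; last first.
      by rewrite size_rev size_take; move: hL; rewrite size_map => ->; case: ifP.
    by rewrite -map_take revflat size_rev.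
  have hlq : len q = size (flatten (map (fun v => rev (@arrs V A v)) ws)) by rewrite /len -hq size_rev.
  have key := iff_trans haI hm.
  by rewrite hpi hlq /len addnC -(size_rev (arrs a)).
Qed.
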